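(* (a) In Case I, there exist $\delta,\beta_0,c_2>0$ such that, setting $B_{l,\beta}=\,]-2\beta^{1/\alpha},-\beta^{1/\alpha}[\times]-\delta,\delta[$, for every $0<\beta\le\beta_0$ one has $\frac{\partial h_0}{\partial x_1}\le -c_2\beta^{1-1/\alpha}$ on $B_{l,\beta}$. (b) In Case II, there exist $\theta_0\in\,]0,\pi/2[$ and $c_2,\beta_0>0$ such that, setting $B_{p,\beta}=\{(x_1,x_2)\in\mathbb{R}^2:\ \beta^{1/\alpha}\le\rho\le2\beta^{1/\alpha},\ \pi-\theta_0\le\theta\le\pi+\theta_0\}$ (where $(\rho,\theta)$ are polar coordinates of $(x_1,x_2)$), for every $0<\beta\le\beta_0$ one has $\frac{\partial h_0}{\partial x_1}\le-c_2\beta^{1-1/\alpha}$ on $B_{p,\beta}$.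
   Context: Let $\Omega\subset\mathbb{R}^2$ be a bounded open set with regular boundary, $0\in\Omega$, and $h_0\in C^1(\bar\Omega)$, $h_0\ge0$, $\min_\Omega h_0=h_0(0)=0$. Case I (line contact): $h_0(0,x_2)=0$ whenever $(0,x_2)\in\Omega$, $h_0(x_1,x_2)>0$ for $x_1\neq0$, and there exist $\alpha\ge1$, a neighborhood $W$ of $0$ and a regular function $h_1>0$ on $\bar W$ with $h_0(x_1,x_2)=|x_1|^\alpha h_1(x_1,x_2)$ on $W$. Case II (point contact): $h_0(x)>0$ for $x\in\Omega\setminus\{0\}$, and there exist $\alpha\ge1$, a neighborhood $W$ of $0$ and a regular $h_1>0$ on $\bar W$ with $h_0(x)=|x|^\alpha h_1(x)$ on $W$. *)

(* Defs.v *)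
From Stdlib Require Import Reals.
From Coquelicot Require Import Coquelicot.
Open Scope R_scope.

Definition dist2 (a b c d : R) : R := sqrt ((a - c) ^ 2 + (b - d) ^ 2).

Definition norm2 (x1 x2 : R) : R := sqrt (x1 ^ 2 + x2 ^ 2).

Definition open2 (S : R -> R -> Prop) : Prop :=
  forall x y, S x y -> exists r, 0 < r /\ forall a b, dist2 x y a b < r -> S a b.

Definition bounded2 (S : R -> R -> Prop) : Prop :=
  exists M, forall x y, S x y -> norm2 x y <= M.

Definition closure2 (S : R -> R -> Prop) (x y : R) : Prop :=
  forall eps, 0 < eps -> exists a b, S a b /\ dist2 x y a b < eps.

Definition cont_on2 (T : R -> R -> Prop) (g : R -> R -> R) : Prop :=
  forall x y, T x y -> forall eps, 0 < eps -> exists del, 0 < del /\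
    forall a b, T a b -> dist2 x y a b < del -> Rabs (g a b - g x y) < eps.

Definition pd1 (f : R -> R -> R) (x y : R) : R := Derive (fun t => f t y) x.
Definition pd2 (f : R -> R -> R) (x y : R) : R := Derive (fun t => f x t) y.

(* f ∈ C^1(S̄) for an open set S: f is continuous on S̄, has partial
   derivatives on S, and these partial derivatives extend continuously to S̄. *)
Definition C1_closure (S : R -> R -> Prop) (f : R -> R -> R) : Prop :=
  cont_on2 (closure2 S) f /\
  (forall x y, S x y -> ex_derive (fun t => f t y) x /\ ex_derive (fun t => f x t) y) /\
  exists g1 g2 : R -> R -> R,
    cont_on2 (closure2 S) g1 /\ cont_on2 (closure2 S) g2 /\
    (forall x y, S x y -> pd1 f x y = g1 x y /\ pd2 f x y = g2 x y).

(* r ^ a for r >= 0 and real a > 0, with the convention 0 ^ a = 0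
   (Stdlib's Rpower 0 a is exp (a * ln 0) = 1, which is not wanted). *)
Definition rpow (r a : R) : R := if Rle_dec r 0 then 0 else Rpower r a.

Definition standing (Om : R -> R -> Prop) (h0 : R -> R -> R) : Prop :=
  open2 Om /\ bounded2 Om /\ Om 0 0 /\ C1_closure Om h0 /\
  (forall x y, closure2 Om x y -> 0 <= h0 x y) /\ h0 0 0 = 0.

Definition caseI (Om : R -> R -> Prop) (h0 : R -> R -> R) (alpha : R) : Prop :=
  (forall x2, Om 0 x2 -> h0 0 x2 = 0) /\
  (forall x1 x2, Om x1 x2 -> x1 <> 0 -> 0 < h0 x1 x2) /\
  1 <= alpha /\
  exists (W : R -> R -> Prop) (h1 : R -> R -> R),
    open2 W /\ W 0 0 /\ C1_closure W h1 /\
    (forall x1 x2, closure2 W x1 x2 -> 0 < h1 x1 x2) /\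
    (forall x1 x2, W x1 x2 -> Om x1 x2 -> h0 x1 x2 = rpow (Rabs x1) alpha * h1 x1 x2).

Definition caseII (Om : R -> R -> Prop) (h0 : R -> R -> R) (alpha : R) : Prop :=
  (forall x1 x2, Om x1 x2 -> (x1, x2) <> (0, 0) -> 0 < h0 x1 x2) /\
  1 <= alpha /\
  exists (W : R -> R -> Prop) (h1 : R -> R -> R),
    open2 W /\ W 0 0 /\ C1_closure W h1 /\
    (forall x1 x2, closure2 W x1 x2 -> 0 < h1 x1 x2) /\
    (forall x1 x2, W x1 x2 -> Om x1 x2 -> h0 x1 x2 = rpow (norm2 x1 x2) alpha * h1 x1 x2).

Definition B_l (alpha delta beta : R) (x1 x2 : R) : Prop :=
  - 2 * rpow beta (1 / alpha) < x1 < - rpow beta (1 / alpha) /\ - delta < x2 < delta.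

Definition B_p (alpha theta0 beta : R) (x1 x2 : R) : Prop :=
  let rho := norm2 x1 x2 in
  rpow beta (1 / alpha) <= rho <= 2 * rpow beta (1 / alpha) /\
  exists theta, PI - theta0 <= theta <= PI + theta0 /\
    x1 = rho * cos theta /\ x2 = rho * sin theta.

(* Main.v *)
Require Import Defs.
From Stdlib Require Import Reals Lra Psatz.
From Coquelicot Require Import Coquelicot.
Open Scope R_scope.

Lemma dist_small (a b R0 : R) : 0 < R0 -> Rabs a < R0 -> Rabs b < R0 -> dist2 0 0 a b < 2 * R0.
Proof.
  intros H0 Ha Hb. unfold dist2.
  rewrite <- (sqrt_pow2 (2 * R0)) by lra.
  apply sqrt_lt_1_alt. split; [nra|].
  replace ((0 - a)^2) with (Rabs a ^ 2) by (rewrite pow2_abs; ring).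
  replace ((0 - b)^2) with (Rabs b ^ 2) by (rewrite pow2_abs; ring).
  pose proof (Rabs_pos a); pose proof (Rabs_pos b). nra.
Qed.

Lemma in_closure (S : R -> R -> Prop) x y : S x y -> closure2 S x y.
Proof.
  intros H eps He. exists x, y. split; auto. unfold dist2.
  replace ((x - x) ^ 2 + (y - y) ^ 2) with 0 by ring. rewrite sqrt_0. lra.
Qed.

Lemma setup (Om W : R -> R -> Prop) (h1 : R -> R -> R) :
  open2 Om -> Om 0 0 -> open2 W -> W 0 0 -> C1_closure W h1 ->
  (forall x1 x2, closure2 W x1 x2 -> 0 < h1 x1 x2) ->
  exists R0 m M, 0 < R0 /\ 0 < m /\ 0 < M /\
   forall a b, Rabs a < R0 -> Rabs b < R0 ->
     W a b /\ Om a b /\ m <= h1 a b /\ Rabs (pd1 h1 a b) <= M /\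
     ex_derive (fun t => h1 t b) a.
Proof.
  intros HOm HOm0 HW HW0 [Hc [Hd [g1 [g2 [Hg1 [Hg2 Heq]]]]]] Hpos.
  destruct (HOm 0 0 HOm0) as [r1 [Hr1 H1]].
  destruct (HW 0 0 HW0) as [r2 [Hr2 H2]].
  assert (Hp0 : 0 < h1 0 0) by (apply Hpos, in_closure; auto).
  destruct (Hc 0 0 (in_closure _ _ _ HW0) (h1 0 0 / 2)) as [d3 [Hd3 H3]]; [lra|].
  destruct (Hg1 0 0 (in_closure _ _ _ HW0) 1) as [d4 [Hd4 H4]]; [lra|].
  set (R0 := Rmin (Rmin r1 r2) (Rmin d3 d4) / 2).
  assert (HR0 : 0 < R0).
  { unfold R0. assert (0 < Rmin (Rmin r1 r2) (Rmin d3 d4)) by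
      (repeat apply Rmin_glb_lt; auto). lra. }
  exists R0, (h1 0 0 / 2), (Rabs (g1 0 0) + 1).
  split; [auto|split; [lra|split; [pose proof (Rabs_pos (g1 0 0)); lra|]]].
  intros a b Ha Hb.
  pose proof (dist_small a b R0 HR0 Ha Hb) as Hd0.
  assert (E : 2 * R0 = Rmin (Rmin r1 r2) (Rmin d3 d4)) by (unfold R0; field).
  rewrite E in Hd0.
  assert (Hdr1 : dist2 0 0 a b < r1).
  { eapply Rlt_le_trans; [exact Hd0|]. eapply Rle_trans; apply Rmin_l. }
  assert (Hdr2 : dist2 0 0 a b < r2).
  { eapply Rlt_le_trans; [exact Hd0|]. eapply Rle_trans; [apply Rmin_l|apply Rmin_r]. }
  assert (Hdr3 : dist2 0 0 a b < d3).
  { eapply Rlt_le_trans; [exact Hd0|]. eapply Rle_trans; [apply Rmin_r|apply Rmin_l]. }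
  assert (Hdr4 : dist2 0 0 a b < d4).
  { eapply Rlt_le_trans; [exact Hd0|]. eapply Rle_trans; [apply Rmin_r|apply Rmin_r]. }
  assert (HWab : W a b) by auto.
  split; [auto|split; [auto|]].
  split.
  { specialize (H3 a b (in_closure _ _ _ HWab) Hdr3). apply Rabs_def2 in H3. lra. }
  split.
  { destruct (Heq a b HWab) as [-> _].
    specialize (H4 a b (in_closure _ _ _ HWab) Hdr4).
    pose proof (Rabs_triang_inv (g1 a b) (g1 0 0)). lra. }
  apply (Hd a b HWab).
Qed.

Lemma mk_locally x eps (P : R -> Prop) : 0 < eps ->
  (forall t, Rabs (t - x) < eps -> P t) -> locally x P.
Proof.
  intros He H. exists (mkposreal eps He). intros t Ht. apply H. exact Ht.
Qed.

Lemma pd1_prod (h0 h1 : R -> R -> R) (F : R -> R) x1 x2 dF :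
  locally x1 (fun t => F t * h1 t x2 = h0 t x2) -> is_derive F x1 dF ->
  ex_derive (fun t => h1 t x2) x1 ->
  pd1 h0 x1 x2 = dF * h1 x1 x2 + F x1 * pd1 h1 x1 x2.
Proof.
  intros Hl HF [d Hd].
  replace (pd1 h1 x1 x2) with d by (symmetry; apply is_derive_unique; exact Hd).
  unfold pd1. apply is_derive_unique.
  apply (is_derive_ext_loc (fun t => F t * h1 t x2)); auto.
  apply (is_derive_mult F (fun t => h1 t x2)); auto.
  intros; apply Rmult_comm.
Qed.

Lemma dI x1 a : x1 < 0 ->
  is_derive (fun t => Rpower (- t) a) x1 (- (a * Rpower (- x1) (a - 1))).
Proof.
  intros H. apply is_derive_Reals.
  replace (- (a * Rpower (- x1) (a - 1))) with ((a * Rpower (- x1) (a - 1)) * (-1)) by ring.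
  apply (derivable_pt_lim_comp (fun t => - t) (fun u => Rpower u a)).
  - apply derivable_pt_lim_opp with (f := id). apply derivable_pt_lim_id.
  - apply derivable_pt_lim_power. lra.
Qed.

Lemma dII x1 x2 a : x1 <> 0 ->
  is_derive (fun t => Rpower (sqrt (t ^ 2 + x2 ^ 2)) a) x1
    (a * Rpower (sqrt (x1 ^ 2 + x2 ^ 2)) (a - 1) * (x1 / sqrt (x1 ^ 2 + x2 ^ 2))).
Proof.
  intros H.
  assert (Hp : 0 < x1 ^ 2 + x2 ^ 2) by (assert (x1 * x1 > 0) by (apply Rsqr_pos_lt; auto); nra).
  assert (Hs : 0 < sqrt (x1 ^ 2 + x2 ^ 2)) by (apply sqrt_lt_R0; auto).
  assert (Hd : is_derive (fun t => sqrt (t ^ 2 + x2 ^ 2)) x1 (x1 / sqrt (x1 ^ 2 + x2 ^ 2))).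
  { assert (Hq : is_derive (fun t : R => t ^ 2 + x2 ^ 2) x1 (2 * x1)).
    { auto_derive; auto; ring. }
    pose proof (is_derive_sqrt _ _ _ Hq Hp) as K.
    replace (x1 / sqrt (x1 ^ 2 + x2 ^ 2)) with (2 * x1 / (2 * sqrt (x1 ^ 2 + x2 ^ 2))) by (field; lra).
    exact K. }
  apply is_derive_Reals. apply is_derive_Reals in Hd.
  apply (derivable_pt_lim_comp (fun t => sqrt (t ^ 2 + x2 ^ 2)) (fun u => Rpower u a)).
  - exact Hd.
  - apply derivable_pt_lim_power. auto.
Qed.

Lemma rpow_pos r a : 0 < r -> rpow r a = Rpower r a.
Proof. intros H. unfold rpow. destruct (Rle_dec r 0); [lra|auto]. Qed.

Lemma Rpower_gt0 x y : 0 < Rpower x y.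
Proof. unfold Rpower. apply exp_pos. Qed.

Lemma b_bound a s beta : 1 <= a -> 0 < s -> 0 < beta <= Rpower s a ->
  Rpower beta (1 / a) <= s.
Proof.
  intros Ha Hs Hb.
  apply Rle_trans with (Rpower (Rpower s a) (1 / a)).
  - apply Rle_Rpower_l; [apply Rlt_le; unfold Rdiv; rewrite Rmult_1_l; apply Rinv_0_lt_compat; lra|lra].
  - rewrite Rpower_mult. replace (a * (1 / a)) with 1 by (field; lra). rewrite Rpower_1; lra.
Qed.

Lemma lower a beta rho : 1 <= a -> 0 < beta -> Rpower beta (1 / a) <= rho ->
  Rpower beta (1 - 1 / a) <= Rpower rho (a - 1).
Proof.
  intros Ha Hb Hr.
  replace (1 - 1 / a) with ((1 / a) * (a - 1)) by (field; lra).
  rewrite <- Rpower_mult. apply Rle_Rpower_l; [lra|]. split; auto. apply Rpower_gt0.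
Qed.

Lemma split_pow rho a : 0 < rho -> Rpower rho a = Rpower rho (a - 1) * rho.
Proof.
  intros H. rewrite <- (Rpower_1 rho) at 3 by auto. rewrite <- Rpower_plus. f_equal; ring.
Qed.

Lemma cos_le th : PI - PI / 3 <= th <= PI + PI / 3 -> cos th <= - (1 / 2).
Proof.
  intros H. pose proof PI_RGT_0.
  replace th with ((th - PI) + PI) by ring. rewrite neg_cos.
  set (u := th - PI).
  assert (Hu : Rabs u <= PI / 3) by (unfold u; apply Rabs_le; lra).
  assert (cos u = cos (Rabs u)).
  { unfold Rabs. destruct (Rcase_abs u); auto. rewrite cos_neg; auto. }
  rewrite H1. rewrite <- cos_PI3.
  destruct (Req_dec (Rabs u) (PI / 3)) as [E|E]; [rewrite E; lra|].
  assert (cos (PI / 3) < cos (Rabs u)).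
  { apply cos_decreasing_1; try lra; pose proof (Rabs_pos u); lra. }
  lra.
Qed.

Theorem lemma3p3 (Om : R -> R -> Prop) (h0 : R -> R -> R) (alpha : R) :
  standing Om h0 ->
  (caseI Om h0 alpha ->
     exists delta beta0 c2, 0 < delta /\ 0 < beta0 /\ 0 < c2 /\
       forall beta, 0 < beta <= beta0 ->
       forall x1 x2, B_l alpha delta beta x1 x2 ->
         pd1 h0 x1 x2 <= - c2 * rpow beta (1 - 1 / alpha)) /\
  (caseII Om h0 alpha ->
     exists theta0 c2 beta0, 0 < theta0 < PI / 2 /\ 0 < c2 /\ 0 < beta0 /\
       forall beta, 0 < beta <= beta0 ->
       forall x1 x2, B_p alpha theta0 beta x1 x2 ->
         pd1 h0 x1 x2 <= - c2 * rpow beta (1 - 1 / alpha)).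
Proof.
  intros [HOm [_ [HOm0 _]]]. split.
  - intros [_ [_ [Ha [W [h1 [HW [HW0 [HC [Hpos Hrep]]]]]]]]].
    destruct (setup Om W h1 HOm HOm0 HW HW0 HC Hpos) as [R0 [m [M [HR0 [Hm [HM Hs]]]]]].
    set (s := Rmin R0 (m / (2 * M))).
    assert (Hs0 : 0 < s) by (apply Rmin_glb_lt; auto; apply Rdiv_lt_0_compat; lra).
    assert (HsR : s <= R0) by apply Rmin_l.
    assert (HsM : s <= m / (2 * M)) by apply Rmin_r.
    exists R0, (Rpower (s / 2) alpha), (m / 2).
    split; [auto|split; [apply Rpower_gt0|split; [lra|]]].
    intros beta Hb x1 x2 [[Hx1a Hx1b] [Hx2a Hx2b]].
    rewrite rpow_pos in Hx1a, Hx1b by lra. rewrite rpow_pos by lra.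
    set (b := Rpower beta (1 / alpha)) in *.
    assert (Hb0 : 0 < b) by apply Rpower_gt0.
    assert (Hbs : b <= s / 2) by (apply b_bound; auto; lra).
    assert (Hx2 : Rabs x2 < R0) by (apply Rabs_def1; lra).
    rewrite (pd1_prod h0 h1 (fun t => Rpower (- t) alpha) x1 x2 (- (alpha * Rpower (- x1) (alpha - 1)))).
    + destruct (Hs x1 x2) as [_ [_ [Hh1 [Hg1 _]]]]; [apply Rabs_def1; lra|auto|].
      pose proof (lower alpha beta (- x1) Ha (proj1 Hb) ltac:(fold b; lra)) as Hlow.
      rewrite (split_pow (- x1) alpha) by lra.
      set (P := Rpower (- x1) (alpha - 1)) in *.
      set (Q := Rpower beta (1 - 1 / alpha)) in *.
      set (g := pd1 h1 x1 x2) in *.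
      assert (HQ : 0 < Q) by apply Rpower_gt0.
      assert (Hg : g <= M) by (pose proof (Rle_abs g); lra).
      assert (HxM : - x1 * M <= m / 2).
      { assert (- x1 <= m / (2 * M)) by lra.
        apply Rmult_le_compat_r with (r := M) in H; [|lra].
        replace (m / (2 * M) * M) with (m / 2) in H by (field; lra). lra. }
      assert (HP : 0 < P) by apply Rpower_gt0.
      assert (T1 : - (alpha * P) * h1 x1 x2 <= - P * m).
      { assert (alpha * h1 x1 x2 >= m) by nra. nra. }
      assert (T2 : P * - x1 * g <= P * (m / 2)).
      { apply Rle_trans with (P * (- x1 * M)); [|nra].
        replace (P * - x1 * g) with (P * (- x1 * g)) by ring.
        apply Rmult_le_compat_l; [lra|]. apply Rmult_le_compat_l; lra. }
      nra.
    + apply (mk_locally x1 (Rmin (R0 - - x1) (- x1))).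
      { apply Rmin_glb_lt; lra. }
      intros t Ht. apply Rabs_def2 in Ht.
      assert (Ht1 : t - x1 < R0 - - x1) by (pose proof (Rmin_l (R0 - - x1) (- x1)); lra).
      assert (Ht2 : t - x1 < - x1) by (pose proof (Rmin_r (R0 - - x1) (- x1)); lra).
      assert (Htn : t < 0) by lra.
      assert (Ht3 : - (t - x1) < R0 - - x1) by (pose proof (Rmin_l (R0 - - x1) (- x1)); lra).
      assert (HtR : Rabs t < R0) by (apply Rabs_def1; lra).
      destruct (Hs t x2 HtR Hx2) as [HWt [HOt _]].
      rewrite Hrep by auto. rewrite rpow_pos by (apply Rabs_pos_lt; lra).
      rewrite Rabs_left by lra. reflexivity.
    + apply dI; lra.
    + apply (Hs x1 x2); [apply Rabs_def1; lra|auto].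
  - intros [_ [Ha [W [h1 [HW [HW0 [HC [Hpos Hrep]]]]]]]].
    destruct (setup Om W h1 HOm HOm0 HW HW0 HC Hpos) as [R0 [m [M [HR0 [Hm [HM Hs]]]]]].
    set (s := Rmin (R0 / 2) (m / (4 * M))).
    assert (Hs0 : 0 < s) by (apply Rmin_glb_lt; try lra; apply Rdiv_lt_0_compat; lra).
    assert (HsR : s <= R0 / 2) by apply Rmin_l.
    assert (HsM : s <= m / (4 * M)) by apply Rmin_r.
    pose proof PI_RGT_0 as HPI.
    exists (PI / 3), (m / 4), (Rpower (s / 2) alpha).
    split; [lra|split; [lra|split; [apply Rpower_gt0|]]].
    intros beta Hb x1 x2 [[Hr1 Hr2] [th [Hth [Ex1 Ex2]]]].
    rewrite rpow_pos in Hr1, Hr2 by lra. rewrite rpow_pos by lra.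
    set (b := Rpower beta (1 / alpha)) in *.
    set (rho := norm2 x1 x2) in *.
    assert (Hb0 : 0 < b) by apply Rpower_gt0.
    assert (Hbs : b <= s / 2) by (apply b_bound; auto; lra).
    pose proof (cos_le th Hth) as Hcos.
    pose proof (COS_bound th) as Hcb. pose proof (SIN_bound th) as Hsb.
    assert (Hx1n : x1 <= - rho / 2) by (rewrite Ex1; nra).
    assert (Hx1a : Rabs x1 < R0) by (apply Rabs_def1; nra).
    assert (Hx2a : Rabs x2 < R0) by (apply Rabs_def1; nra).
    assert (Hrho : rho = sqrt (x1 ^ 2 + x2 ^ 2)) by reflexivity.
    rewrite (pd1_prod h0 h1 (fun t => Rpower (sqrt (t ^ 2 + x2 ^ 2)) alpha) x1 x2
      (alpha * Rpower (sqrt (x1 ^ 2 + x2 ^ 2)) (alpha - 1) * (x1 / sqrt (x1 ^ 2 + x2 ^ 2)))).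
    + rewrite <- Hrho.
      destruct (Hs x1 x2) as [_ [_ [Hh1 [Hg1 _]]]]; auto.
      pose proof (lower alpha beta rho Ha (proj1 Hb) ltac:(fold b; lra)) as Hlow.
      rewrite (split_pow rho alpha) by lra.
      set (P := Rpower rho (alpha - 1)) in *.
      set (Q := Rpower beta (1 - 1 / alpha)) in *.
      set (g := pd1 h1 x1 x2) in *.
      assert (HQ : 0 < Q) by apply Rpower_gt0.
      assert (HP : 0 < P) by apply Rpower_gt0.
      assert (Hg : g <= M) by (pose proof (Rle_abs g); lra).
      assert (HxM : rho * M <= m / 4).
      { assert (rho <= m / (4 * M)) by lra.
        apply Rmult_le_compat_r with (r := M) in H; [|lra].
        replace (m / (4 * M) * M) with (m / 4) in H by (field; lra). lra. }
      assert (Hq : x1 / rho <= - (1 / 2)).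
      { apply Rmult_le_reg_r with rho; [lra|].
        replace (x1 / rho * rho) with x1 by (field; lra). lra. }
      assert (T1 : alpha * P * (x1 / rho) * h1 x1 x2 <= - P * m / 2).
      { replace (alpha * P * (x1 / rho) * h1 x1 x2) with ((alpha * P * h1 x1 x2) * (x1 / rho)) by ring.
        assert (0 < alpha * P * h1 x1 x2) by (apply Rmult_lt_0_compat; [apply Rmult_lt_0_compat|]; lra).
        assert (alpha * h1 x1 x2 >= m) by nra.
        assert (alpha * P * h1 x1 x2 >= P * m) by nra.
        set (A := alpha * P * h1 x1 x2) in *.
        assert (A * (x1 / rho) <= A * (- (1/2))) by (apply Rmult_le_compat_l; lra). lra. }
      assert (T2 : P * rho * g <= P * (m / 4)).
      { apply Rle_trans with (P * (rho * M)); [|nra].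
        replace (P * rho * g) with (P * (rho * g)) by ring.
        apply Rmult_le_compat_l; [lra|]. apply Rmult_le_compat_l; lra. }
      nra.
    + apply (mk_locally x1 (Rmin (R0 - Rabs x1) (Rabs x1))).
      { apply Rmin_glb_lt; try lra. apply Rabs_pos_lt. lra. }
      intros t Ht.
      assert (Ht1 : Rabs (t - x1) < R0 - Rabs x1) by (pose proof (Rmin_l (R0 - Rabs x1) (Rabs x1)); lra).
      assert (Ht2 : Rabs (t - x1) < Rabs x1) by (pose proof (Rmin_r (R0 - Rabs x1) (Rabs x1)); lra).
      assert (Htn : t <> 0).
      { intro E. rewrite E in Ht2. rewrite Rminus_0_l, Rabs_Ropp in Ht2. lra. }
      assert (HtR : Rabs t < R0).
      { pose proof (Rabs_triang (t - x1) x1). replace (t - x1 + x1) with t in H by ring. lra. }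
      destruct (Hs t x2) as [HWt [HOt _]]; auto.
      rewrite Hrep by auto. rewrite rpow_pos; [reflexivity|].
      unfold norm2. apply sqrt_lt_R0.
      assert (t * t > 0) by (apply Rsqr_pos_lt; auto). nra.
    + apply dII; lra.
    + apply (Hs x1 x2); auto.
Qed.
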